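(* Under the standing assumptions of the context, define a ternary relation $C$ on $N$ by: $C(x;y,z)$ holds iff either (a) $y=z$ and $x\ne y$; or (b) $x,y,z$ are distinct, $x<\min\{y,z\}$ and $\{x,y,z\}\in E$; or (c) $x,y,z$ are distinct, $\max\{y,z\}<x$ and $\{x,y,z\}\notin E$. Then $C$ satisfies axioms (C1)–(C6), and for all distinct $x,y,z\in N$ at least one of $C(x;y,z),C(y;x,z),C(z;x,y)$ holds.
   Context: Standing assumptions: $(N,E)$ is a countably infinite 3-hypergraph (a set $N$ with a set $E$ of 3-element subsets, the edges) which is ${\le}4$-set-homogeneous (for $s\le4$, whenever $U,V\subseteq N$ of size $s$ carry isomorphic induced subhypergraphs there is $g\in \mathrm{Aut}(N,E)$ with $U^g=V$), and $\le$ is a total order on $N$ preserved by $\mathrm{Aut}(N,E)$. Moreover, for each $i\in\{1,2,3\}$ there is a 4-subset of $N$ containing exactly $i$ edges, and for all $u_1<u_2<u_3<u_4$ in $N$: if $\{u_1,\dots,u_4\}$ contains exactly one edge, it is $\{u_1,u_2,u_3\}$; if it contains exactly two edges, they are $\{u_1,u_3,u_4\}$ and $\{u_2,u_3,u_4\}$; if it contains exactly three edges, they are the three 3-subsets containing $u_1$. Axioms, for all $x,y,z,w$: (C1) $C(x;y,z)\to C(x;z,y)$; (C2) $C(x;y,z)\to\neg C(y;x,z)$; (C3) $C(x;y,z)\to (C(x;w,z)\vee C(w;y,z))$; (C4) $x\ne y\to C(x;y,y)$; (C5) $\exists x\, C(x;y,z)$; (C6) $x\ne y\to\exists z(y\ne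 z\wedge C(x;y,z))$. *)

(* Defs.v *)
From Stdlib Require Import List Classical.
Import ListNotations.

(* A 3-hypergraph on a type N: E x y z means {x,y,z} is an edge. *)
Definition hyper3 {N : Type} (E : N -> N -> N -> Prop) : Prop :=
  (forall x y z, E x y z -> x <> y /\ y <> z /\ x <> z) /\
  (forall x y z, E x y z -> E y x z) /\
  (forall x y z, E x y z -> E x z y).

Definition countably_infinite (N : Type) : Prop :=
  exists f : nat -> N, (forall m n, f m = f n -> m = n) /\ (forall x, exists n, f n = x).

Definition is_aut {N : Type} (E : N -> N -> N -> Prop) (g : N -> N) : Prop :=
  (forall x y, g x = g y -> x = y) /\ (forall y, exists x, g x = y) /\
  (forall x y z, E x y z <-> E (g x) (g y) (g z)).

(* U, V finite subsets given as duplicate-free lists; an isomorphism of the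
   induced subhypergraphs is a map f : U -> V that is a bijection U -> V
   and preserves edges and non-edges among elements of U. *)
Definition induced_iso {N : Type} (E : N -> N -> N -> Prop) (U V : list N) (f : N -> N) : Prop :=
  (forall x, In x U -> In (f x) V) /\
  (forall x y, In x U -> In y U -> f x = f y -> x = y) /\
  (forall y, In y V -> exists x, In x U /\ f x = y) /\
  (forall x y z, In x U -> In y U -> In z U -> (E x y z <-> E (f x) (f y) (f z))).

Definition set_homogeneous_le4 {N : Type} (E : N -> N -> N -> Prop) : Prop :=
  forall U V : list N, NoDup U -> NoDup V -> length U <= 4 -> length U = length V ->
    (exists f, induced_iso E U V f) ->
    exists g, is_aut E g /\ (forall y, In y V <-> exists x, In x U /\ g x = y).

Definition strict_total_order {N : Type} (lt : N -> N -> Prop) : Prop :=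
  (forall x, ~ lt x x) /\ (forall x y z, lt x y -> lt y z -> lt x z) /\
  (forall x y, lt x y \/ x = y \/ lt y x).

Definition order_preserved {N : Type} (E : N -> N -> N -> Prop) (lt : N -> N -> Prop) : Prop :=
  forall g, is_aut E g -> forall x y, lt x y -> lt (g x) (g y).

Inductive count_true : list Prop -> nat -> Prop :=
| ct_nil : count_true [] 0
| ct_yes : forall (P : Prop) Ps k, P -> count_true Ps k -> count_true (P :: Ps) (S k)
| ct_no : forall (P : Prop) Ps k, ~ P -> count_true Ps k -> count_true (P :: Ps) k.

Definition edge_count_4 {N : Type} (E : N -> N -> N -> Prop) (a b c d : N) (k : nat) : Prop :=
  count_true [E a b c; E a b d; E a c d; E b c d] k.

Definition standing {N : Type} (E : N -> N -> N -> Prop) (lt : N -> N -> Prop) : Prop :=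
  hyper3 E /\ countably_infinite N /\ set_homogeneous_le4 E /\
  strict_total_order lt /\ order_preserved E lt /\
  (forall i, 1 <= i <= 3 -> exists a b c d : N,
      NoDup [a; b; c; d] /\ edge_count_4 E a b c d i) /\
  (forall u1 u2 u3 u4, lt u1 u2 -> lt u2 u3 -> lt u3 u4 ->
     (edge_count_4 E u1 u2 u3 u4 1 -> E u1 u2 u3) /\
     (edge_count_4 E u1 u2 u3 u4 2 -> E u1 u3 u4 /\ E u2 u3 u4) /\
     (edge_count_4 E u1 u2 u3 u4 3 -> E u1 u2 u3 /\ E u1 u2 u4 /\ E u1 u3 u4)).

Definition Crel {N : Type} (E : N -> N -> N -> Prop) (lt : N -> N -> Prop) (x y z : N) : Prop :=
  (y = z /\ x <> y) \/
  (x <> y /\ y <> z /\ x <> z /\ lt x y /\ lt x z /\ E x y z) \/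
  (x <> y /\ y <> z /\ x <> z /\ lt y x /\ lt z x /\ ~ E x y z).

Definition C_axioms {N : Type} (C : N -> N -> N -> Prop) : Prop :=
  (forall x y z, C x y z -> C x z y) /\
  (forall x y z, C x y z -> ~ C y x z) /\
  (forall x y z w, C x y z -> C x w z \/ C w y z) /\
  (forall x y, x <> y -> C x y y) /\
  (forall y z, exists x, C x y z) /\
  (forall x y, x <> y -> exists z, y <> z /\ C x y z).

(* Main.v *)
Require Import Defs.
From Stdlib Require Import List Classical ClassicalEpsilon.
Import ListNotations.

Ltac ord tri p q :=
  let H := fresh "O" in
  destruct (tri p q) as [H|[H|H]]; [ | exfalso; subst; congruence | ].

Ltac cyc R irr tr :=
  match goal with
  | H1: R ?a ?b, H2: R ?b ?a |- _ => exact (irr a (tr _ _ _ H1 H2))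
  | H1: R ?a ?b, H2: R ?b ?c, H3: R ?c ?a |- _ =>
      exact (irr a (tr _ _ _ (tr _ _ _ H1 H2) H3))
  end.

Ltac neqs R irr :=
  repeat match goal with
  | H: R ?a ?b |- _ =>
      lazymatch goal with _ : a <> b |- _ => fail | _ =>
        assert (a <> b) by (let e := fresh in intro e; rewrite e in H; exact (irr _ H)) end
  | H: R ?a ?b |- _ =>
      lazymatch goal with _ : b <> a |- _ => fail | _ =>
        assert (b <> a) by (let e := fresh in intro e; rewrite e in H; exact (irr _ H)) end
  end.

Ltac satE E s12 s23 :=
  repeat match goal with
  | H: E ?a ?b ?c |- _ =>
      lazymatch goal with _ : E b a c |- _ => fail | _ =>
        assert (E b a c) by exact (s12 _ _ _ H) end
  | H: E ?a ?b ?c |- _ =>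
      lazymatch goal with _ : E a c b |- _ => fail | _ =>
        assert (E a c b) by exact (s23 _ _ _ H) end
  | H: ~ E ?a ?b ?c |- _ =>
      lazymatch goal with _ : ~ E b a c |- _ => fail | _ =>
        assert (~ E b a c) by exact (fun HH => H (s12 _ _ _ HH)) end
  | H: ~ E ?a ?b ?c |- _ =>
      lazymatch goal with _ : ~ E a c b |- _ => fail | _ =>
        assert (~ E a c b) by exact (fun HH => H (s23 _ _ _ HH)) end
  end.


Ltac mkct := repeat first [ apply ct_nil | apply ct_yes; [assumption|] | apply ct_no; [assumption|] ].

Lemma config (N : Type) (E : N -> N -> N -> Prop) (lt : N -> N -> Prop) :
  standing E lt -> forall a b c d, lt a b -> lt b c -> lt c d ->
  (~ E a b c /\ ~ E a b d /\ ~ E a c d /\ ~ E b c d) \/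
  (E a b c /\ ~ E a b d /\ ~ E a c d /\ ~ E b c d) \/
  (~ E a b c /\ ~ E a b d /\ E a c d /\ E b c d) \/
  (E a b c /\ E a b d /\ E a c d /\ ~ E b c d) \/
  (E a b c /\ E a b d /\ E a c d /\ E b c d).
Proof.
  intros (_&_&_&_&_&_&rules) a b c d h1 h2 h3.
  destruct (rules a b c d h1 h2 h3) as (r1&r2&r3).
  unfold edge_count_4 in *.
  destruct (classic (E a b c)), (classic (E a b d)), (classic (E a c d)), (classic (E b c d));
  first [ tauto
        | assert (HC : count_true [E a b c; E a b d; E a c d; E b c d] 1) by mkct; 
          specialize (r1 HC); tauto
        | assert (HC : count_true [E a b c; E a b d; E a c d; E b c d] 2) by mkct; 
          specialize (r2 HC); tauto
        | assert (HC : count_true [E a b c; E a b d; E a c d; E b c d] 3) by mkct; 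
          specialize (r3 HC); tauto ].
Qed.

Lemma transport (N : Type) (E : N -> N -> N -> Prop) (lt : N -> N -> Prop) :
  standing E lt -> forall a b c d, lt a b -> lt c d ->
  exists g, is_aut E g /\ g a = c /\ g b = d.
Proof.
  intros (hE&_&hom&[irr [tr tri]]&op&_) a b c d hab hcd.
  destruct hE as [Ed [s12 s23]].
  assert (nab : a <> b) by (intro; subst; exact (irr _ hab)).
  assert (ncd : c <> d) by (intro; subst; exact (irr _ hcd)).
  set (f := fun t => if excluded_middle_informative (t = a) then c else d).
  assert (fa : f a = c) by (unfold f; destruct excluded_middle_informative; congruence).
  assert (fb : f b = d) by (unfold f; destruct excluded_middle_informative; congruence).
  destruct (hom [a;b] [c;d]) as [g [ga gs]].
  - constructor; [simpl; intros [HH|[]]; congruence| constructor; [simpl; tauto|constructor]].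
  - constructor; [simpl; intros [HH|[]]; congruence| constructor; [simpl; tauto|constructor]].
  - simpl; auto.
  - reflexivity.
  - exists f. split; [|split; [|split]].
    + intros x _. unfold f; destruct excluded_middle_informative; simpl; tauto.
    + intros x y Hx Hy. simpl in Hx, Hy.
      destruct Hx as [<-|[<-|[]]]; destruct Hy as [<-|[<-|[]]]; congruence.
    + intros y Hy. simpl in Hy. destruct Hy as [<-|[<-|[]]].
      * exists a; simpl; auto.
      * exists b; simpl; auto.
    + intros x y z Hx Hy Hz. simpl in Hx, Hy, Hz.
      destruct Hx as [<-|[<-|[]]]; destruct Hy as [<-|[<-|[]]]; destruct Hz as [<-|[<-|[]]];
      rewrite ?fa, ?fb; split; intro HH; apply Ed in HH; destruct HH as (?&?&?); congruence.
  - assert (Ha : In (g a) [c;d]) by (apply gs; exists a; simpl; auto).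
    assert (Hb : In (g b) [c;d]) by (apply gs; exists b; simpl; auto).
    assert (Hlt := op g ga a b hab).
    exists g; split; [exact ga|].
    destruct ga as [ginj _].
    assert (gab : g a <> g b) by (intro HH; apply nab; exact (ginj _ _ HH)).
    clear fa fb f. simpl in Ha, Hb.
    destruct Ha as [Ha|[Ha|[]]]; destruct Hb as [Hb|[Hb|[]]]; subst; try congruence.
    + auto.
    + exfalso. eapply irr. eapply tr; eassumption.
Qed.

Lemma ct_pos (Ps : list Prop) k : count_true Ps k -> 0 < k -> exists P, In P Ps /\ P.
Proof.
  induction 1; intros h.
  - inversion h.
  - exists P; simpl; auto.
  - destruct (IHcount_true h) as [Q [HQ1 HQ2]]; exists Q; simpl; auto.
Qed.

Lemma ct_neg (Ps : list Prop) k : count_true Ps k -> k < length Ps -> exists P, In P Ps /\ ~ P.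
Proof.
  induction 1; simpl; intros h.
  - inversion h.
  - destruct IHcount_true as [Q [HQ1 HQ2]]; [apply PeanoNat.Nat.succ_lt_mono; exact h|].
    exists Q; simpl; auto.
  - exists P; simpl; auto.
Qed.

Ltac splitall :=
  repeat match goal with
  | H : _ /\ _ |- _ => destruct H
  | H : _ \/ _ |- _ => destruct H
  | H : False |- _ => destruct H
  end.

Lemma sorted_triples (N : Type) (E : N -> N -> N -> Prop) (lt : N -> N -> Prop) :
  standing E lt ->
  (exists t1 t2 t3, lt t1 t2 /\ lt t2 t3 /\ E t1 t2 t3) /\
  (exists t1 t2 t3, lt t1 t2 /\ lt t2 t3 /\ ~ E t1 t2 t3).
Proof.
  intros st. pose proof st as (hE&_&_&[irr [tr tri]]&_&ex&_).
  destruct hE as [Ed [s12 s23]].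
  destruct (ex 1) as (a&b&c&d&nd&ct); [split; repeat constructor|].
  unfold edge_count_4 in ct.
  assert (dist : a <> b /\ a <> c /\ a <> d /\ b <> c /\ b <> d /\ c <> d).
  { inversion nd as [|? ? n1 nd1]; subst. inversion nd1 as [|? ? n2 nd2]; subst.
    inversion nd2 as [|? ? n3 nd3]; subst. simpl in *.
    repeat split; intro; subst; tauto. }
  assert (K : forall p q r, p <> q -> q <> r -> p <> r ->
            forall (Q : Prop), (Q <-> E p q r) ->
            (Q -> exists t1 t2 t3, lt t1 t2 /\ lt t2 t3 /\ E t1 t2 t3) /\
            (~ Q -> exists t1 t2 t3, lt t1 t2 /\ lt t2 t3 /\ ~ E t1 t2 t3)).
  { intros p q r h1 h2 h3 Q HQ. split; intro HH; [apply HQ in HH | assert (HH' : ~ E p q r) by tauto; clear HH; rename HH' into HH];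
    ord tri p q; ord tri q r; ord tri p r; try (exfalso; cyc lt irr tr);
    match goal with H1: lt ?a ?b, H2: lt ?b ?c |- _ => exists a, b, c end;
    satE E s12 s23; tauto. }
  destruct dist as (d1&d2&d3&d4&d5&d6).
  split.
  - destruct (ct_pos _ _ ct) as [P [HP1 HP2]]; [auto|].
    simpl in HP1; splitall; subst.
    + refine (proj1 (K a b c _ _ _ _ (iff_refl _)) HP2); auto.
    + refine (proj1 (K a b d _ _ _ _ (iff_refl _)) HP2); auto.
    + refine (proj1 (K a c d _ _ _ _ (iff_refl _)) HP2); auto.
    + refine (proj1 (K b c d _ _ _ _ (iff_refl _)) HP2); auto.
  - destruct (ct_neg _ _ ct) as [P [HP1 HP2]]; [simpl; repeat constructor|].
    simpl in HP1; splitall; subst.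
    + refine (proj2 (K a b c _ _ _ _ (iff_refl _)) HP2); auto.
    + refine (proj2 (K a b d _ _ _ _ (iff_refl _)) HP2); auto.
    + refine (proj2 (K a c d _ _ _ _ (iff_refl _)) HP2); auto.
    + refine (proj2 (K b c d _ _ _ _ (iff_refl _)) HP2); auto.
Qed.

Theorem lemma3p10 (N : Type) (E : N -> N -> N -> Prop) (lt : N -> N -> Prop) :
  standing E lt ->
  C_axioms (Crel E lt) /\
  (forall x y z, x <> y -> y <> z -> x <> z ->
     Crel E lt x y z \/ Crel E lt y x z \/ Crel E lt z x y).
Proof.
  intros st. pose proof st as (hE&ci&_&[irr [tr tri]]&op&_&_).
  destruct hE as [Ed [s12 s23]].
  destruct (sorted_triples N E lt st) as [(t1&t2&t3&l12&l23&e123) (n1&n2&n3&m12&m23&ne123)].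
  pose proof (config N E lt st) as cfg.
  assert (C1 : forall x y z, Crel E lt x y z -> Crel E lt x z y).
  { unfold Crel; intros x y z H; splitall; subst.
    - left; auto.
    - right; left; repeat split; auto.
    - right; right; repeat split; auto. }
  split; [split; [exact C1|split; [|split; [|split; [|split]]]]|].
  -
    intros x y z H H'. unfold Crel in *. splitall; subst; try congruence;
    try (exfalso; cyc lt irr tr); satE E s12 s23; tauto.
  -
    intros x y z w H.
    destruct (classic (w = x)) as [->|nwx]; [tauto|].
    destruct (classic (w = y)) as [->|nwy]; [tauto|].
    destruct (classic (w = z)) as [->|nwz].
    { left. unfold Crel in *. splitall; subst; left; auto. }
    unfold Crel in H. splitall; subst.
    + right. left. split; auto.
    + ord tri x y; ord tri x z; ord tri x w; ord tri y z; ord tri y w; ord tri z w;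
      try (exfalso; cyc lt irr tr);
      match goal with H1: lt ?a ?b, H2: lt ?b ?c, H3: lt ?c ?d |- _ =>
        pose proof (cfg a b c d H1 H2 H3) end;
      splitall; neqs lt irr; unfold Crel; satE E s12 s23; tauto.
    + ord tri x y; ord tri x z; ord tri x w; ord tri y z; ord tri y w; ord tri z w;
      try (exfalso; cyc lt irr tr);
      match goal with H1: lt ?a ?b, H2: lt ?b ?c, H3: lt ?c ?d |- _ =>
        pose proof (cfg a b c d H1 H2 H3) end;
      splitall; neqs lt irr; unfold Crel; satE E s12 s23; tauto.
  -
    intros x y h; left; auto.
  -
    intros y z. destruct (classic (y = z)) as [<-|nyz].
    + destruct ci as [f [finj _]].
      destruct (classic (f 0 = y)) as [e|ne].
      * exists (f 1). left. split; auto. intro e'. rewrite <- e' in e. discriminate (finj _ _ e).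
      * exists (f 0). left. auto.
    + assert (G : forall y z, lt y z -> exists x, Crel E lt x y z).
      { clear y z nyz. intros y z hyz.
        destruct (transport N E lt st t2 t3 y z l23 hyz) as [g [ga [<- <-]]]. pose proof (proj2 (proj2 ga)) as gE.
        exists (g t1). pose proof (op g) as og.
        assert (a1 := og ga _ _ l12).
        assert (a2 := og ga _ _ (tr _ _ _ l12 l23)).
        assert (a3 := og ga _ _ l23).
        apply gE in e123. clear og gE.
        neqs lt irr. unfold Crel. tauto. }
      destruct (tri y z) as [h|[h|h]]; [auto|congruence|].
      destruct (G z y h) as [x Hx]. exists x. apply C1; exact Hx.
  -
    intros x y nxy. destruct (tri x y) as [h|[h|h]]; [|congruence|].
    + destruct (transport N E lt st t1 t2 x y l12 h) as [g [ga [<- <-]]]. pose proof (proj2 (proj2 ga)) as gE.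
      exists (g t3). pose proof (op g) as og.
      assert (a1 := og ga _ _ l12).
      assert (a2 := og ga _ _ (tr _ _ _ l12 l23)).
      assert (a3 := og ga _ _ l23).
      apply gE in e123. clear og gE.
      neqs lt irr. unfold Crel. tauto.
    + destruct (transport N E lt st n2 n3 y x m23 h) as [g [ga [<- <-]]]. pose proof (proj2 (proj2 ga)) as gE.
      exists (g n1). pose proof (op g) as og.
      assert (a1 := og ga _ _ m12).
      assert (a2 := og ga _ _ (tr _ _ _ m12 m23)).
      assert (a3 := og ga _ _ m23).
      assert (ne' : ~ E (g n1) (g n2) (g n3)) by (rewrite <- gE; exact ne123).
      clear og gE.
      neqs lt irr. unfold Crel. satE E s12 s23. tauto.
  -
    intros x y z h1 h2 h3.
    ord tri x y; ord tri x z; ord tri y z; try (exfalso; cyc lt irr tr);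
    destruct (classic (E x y z)); neqs lt irr; unfold Crel; satE E s12 s23; tauto.
Qed.
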